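(* Let $f\in\mathbb{C}[h]$, $\lambda\in S_f$ with $|\lambda|=m\neq 0$, $\dot z\in\mathbb{C}$ and $a\in\mathbb{C}^*$. Then the $m$-dimensional $\mathcal{H}(f)$-modules $A'_{\mathcal{H}(f)}(\lambda,\dot z,a)$ and $B'_{\mathcal{H}(f)}(\lambda,\dot z,a)$ are simple.
   Context: For $f(h)\in\mathbb{C}[h]$, $\mathcal{H}(f)$ is the unital associative $\mathbb{C}$-algebra generated by $x,y,h$ with relations $hx=xf(h)$, $yh=f(h)y$, $yx-xy=f(h)-h$. $S_f$ is the set of maps $\lambda:\mathbb{Z}\to\mathbb{C}$ with $f(\lambda(i))=\lambda(i+1)$ for all $i$; $|\lambda|$ is the nonnegative generator of the subgroup $\{m\in\mathbb{Z}\mid\lambda(i+m)=\lambda(i)\ \forall i\}$. For $\lambda\in S_f$, $\dot z\in\mathbb{C}$: $A_{\mathcal{H}(f)}(\lambda,\dot z)$ is $\mathbb{C}[t,t^{-1}]$ with $ht^i=\lambda(i)t^i$, $xt^i=t^{i+1}$, $yt^i=(\lambda(i)+\dot z)t^{i-1}$; $B_{\mathcal{H}(f)}(\lambda,\dot z)$ is $\mathbb{C}[t,t^{-1}]$ with $ht^i=\lambda(i)t^i$, $xt^i=(\lambda(i+1)+\dot z)t^{i+1}$, $yt^i=t^{i-1}$. These are $\mathcal{H}(f)$-modules, and when $|\lambda|=m\ne0$ and $a\in\mathbb{C}^*$, $\mathbb{C}[t,t^{-1}](t^m-a)$ is a submodule of each; set $A'_{\mathcal{H}(f)}(\lambda,\dot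 z,a)=A_{\mathcal{H}(f)}(\lambda,\dot z)/\mathbb{C}[t,t^{-1}](t^m-a)$ and $B'_{\mathcal{H}(f)}(\lambda,\dot z,a)=B_{\mathcal{H}(f)}(\lambda,\dot z)/\mathbb{C}[t,t^{-1}](t^m-a)$. *)

(* Defs.v *)
(* The base field C is an arbitrary numClosedFieldType
   (MathComp's abstraction of the complex numbers). *)
From HB Require Import structures.
From mathcomp Require Import all_boot all_order all_algebra.
Set Implicit Arguments. Unset Strict Implicit. Unset Printing Implicit Defensive.
Import Order.TTheory GRing.Theory Num.Theory.
Local Open Scope ring_scope.

Section Hf.
Variable C : numClosedFieldType.

(* Laurent polynomials C[t,t^-1]: coefficient functions int -> C
   (c i = coefficient of t^i) with finite support. *)
Definition laurent := int -> C.
Definition finsupp (c : laurent) : Prop :=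
  exists N : nat, forall i : int, (N < `|i|)%N -> c i = 0.

Definition in_Sf (f : {poly C}) (lam : int -> C) : Prop :=
  forall i : int, f.[lam i] = lam (i + 1).

(* |lambda| = m : m is the nonnegative generator of the group of periods *)
Definition lam_period (lam : int -> C) (m : nat) : Prop :=
  forall k : int, (forall i : int, lam (i + k) = lam i) <-> (m%:Z %| k)%Z.

Record Hact := mkHact { act_x : laurent -> laurent;
                        act_y : laurent -> laurent;
                        act_h : laurent -> laurent }.

(* A(lambda, zd):  h t^i = lam i t^i, x t^i = t^(i+1),
   y t^i = (lam i + zd) t^(i-1), written on coefficient functions *)
Definition A_act (lam : int -> C) (zd : C) : Hact :=
  mkHact (fun c i => c (i - 1))
         (fun c i => (lam (i + 1) + zd) * c (i + 1))
         (fun c i => lam i * c i).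

(* B(lambda, zd):  h t^i = lam i t^i, x t^i = (lam (i+1) + zd) t^(i+1),
   y t^i = t^(i-1) *)
Definition B_act (lam : int -> C) (zd : C) : Hact :=
  mkHact (fun c i => (lam i + zd) * c (i - 1))
         (fun c i => c (i + 1))
         (fun c i => lam i * c i).

(* the submodule C[t,t^-1](t^m - a) *)
Definition ideal_tma (m : nat) (a : C) (c : laurent) : Prop :=
  exists g : laurent, finsupp g /\
    forall i : int, c i = g (i - m%:Z) - a * g i.

(* Submodules of the quotient module L/N (L = C[t,t^-1] with action M),
   presented as predicates on representatives that are invariant under
   the equivalence u ~ v <-> u - v in N. *)
Definition qsubmodule (M : Hact) (N : laurent -> Prop) (S : laurent -> Prop)
  : Prop :=
  (forall u, S u -> finsupp u) /\
  [/\ S (fun _ => 0),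
      forall u v, S u -> S v -> S (fun j => u j + v j),
      forall (k : C) u, S u -> S (fun j => k * u j),
      forall u, S u -> [/\ S (act_x M u), S (act_y M u) & S (act_h M u)]
    & forall u v, finsupp v -> N (fun j => u j - v j) -> S u -> S v].

Definition qsimple (M : Hact) (N : laurent -> Prop) : Prop :=
  (exists u, finsupp u /\ ~ N u) /\
  forall S, qsubmodule M N S ->
    (forall u, S u -> N u) \/ (forall u, finsupp u -> S u).

Definition qdim (N : laurent -> Prop) (m : nat) : Prop :=
  exists b : 'I_m -> laurent,
    [/\ forall i, finsupp (b i),
        forall u, finsupp u -> exists k : 'I_m -> C,
           N (fun j => u j - \sum_(i < m) k i * b i j)
      & forall k : 'I_m -> C, N (fun j => \sum_(i < m) k i * b i j) ->
           forall i, k i = 0].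

End Hf.

(* Main.v *)
Require Import Defs.
From HB Require Import structures.
From mathcomp Require Import all_boot all_order all_algebra zify ring.
From Stdlib Require Import FunctionalExtensionality Classical.
Import Order.TTheory GRing.Theory Num.Theory.
Local Open Scope ring_scope.

Section Aux.
Variable C : numClosedFieldType.
Variable m : nat.
Variable a : C.
Hypothesis m0 : m <> 0%N.
Hypothesis a0 : a != 0.

Notation N := (@ideal_tma C m a).

Definition e (i : int) : laurent C := fun l => if l == i then 1 else 0.

Lemma finsupp_e i : finsupp (e i).
Proof.
exists `|i|%N => l H; rewrite /e; case: eqP => // E; subst; lia.
Qed.

Lemma finsupp_add (u v : laurent C) : finsupp u -> finsupp v ->
  finsupp (fun j => u j + v j).
Proof.
move=> [N1 H1] [N2 H2]; exists (maxn N1 N2) => i Hi.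
rewrite H1 ?H2 ?addr0 //; lia.
Qed.

Lemma finsupp_scale k (u : laurent C) : finsupp u -> finsupp (fun j => k * u j).
Proof. by move=> [N1 H1]; exists N1 => i Hi; rewrite H1 // mulr0. Qed.

Lemma finsupp0 : finsupp (fun _ : int => 0 : C).
Proof. by exists 0%N. Qed.

Lemma N_add u v : N u -> N v -> N (fun j => u j + v j).
Proof.
move=> [g1 [f1 H1]] [g2 [f2 H2]]; exists (fun j => g1 j + g2 j); split.
  exact: finsupp_add.
by move=> i; rewrite H1 H2 mulrDr; ring.
Qed.

Lemma N_scale k u : N u -> N (fun j => k * u j).
Proof.
move=> [g1 [f1 H1]]; exists (fun j => k * g1 j); split.
  exact: finsupp_scale.
by move=> i; rewrite H1; ring.
Qed.

Lemma N0 : N (fun _ => 0).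
Proof. by exists (fun _ => 0); split; [exact: finsupp0| move=> i; ring]. Qed.

Lemma N_shift i : N (fun l => e (i + m%:Z) l - a * e i l).
Proof.
exists (e i); split; first exact: finsupp_e.
move=> l; congr (_ - _); rewrite /e.
have -> : (l - m%:Z == i) = (l == i + m%:Z).
  by apply/eqP/eqP; lia.
by [].
Qed.

Lemma N_finsupp u : N u -> finsupp u.
Proof.
move=> [g [[K HK] H]]; exists (K + m)%N => i Hi.
rewrite H !HK ?mulr0 ?subr0 //; lia.
Qed.


Lemma N_small v : N v -> (forall l, (l < 0) \/ (m%:Z <= l) -> v l = 0) ->
  forall l, v l = 0.
Proof.
move=> [g [[K HK] H]] Hv.
have gp : forall i, 0 <= i -> forall q : nat, g i = a ^+ q * g (i + q%:Z * m%:Z).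
  move=> i i0; elim=> [|q IH]; first by rewrite expr0 mul1r mul0r addr0.
  have Hq : m%:Z <= i + q%:Z * m%:Z + m%:Z.
    have : 0 <= q%:Z * m%:Z by rewrite mulr_ge0.
    lia.
  have E := Hv (i + q%:Z * m%:Z + m%:Z) (or_intror Hq).
  rewrite H in E.
  have E1 : i + q%:Z * m%:Z + m%:Z - m%:Z = i + q%:Z * m%:Z by lia.
  rewrite E1 in E; move/eqP: E; rewrite subr_eq0 => /eqP E.
  rewrite IH E exprS mulrCA -mulrA; congr (_ * (_ * g _)); nia.
have gn : forall i, i < 0 -> forall q : nat, a ^+ q * g i = g (i - q%:Z * m%:Z).
  move=> i i0; elim=> [|q IH]; first by rewrite expr0 mul1r mul0r subr0.
  have Hq : i - q%:Z * m%:Z < 0.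
    have : 0 <= q%:Z * m%:Z by rewrite mulr_ge0.
    lia.
  have E := Hv (i - q%:Z * m%:Z) (or_introl Hq).
  rewrite H in E; move/eqP: E; rewrite subr_eq0 => /eqP E.
  rewrite exprS -mulrA IH -E; congr (g _); nia.
have g0 : forall i, g i = 0.
  move=> i; case: (leP 0 i) => Hi.
    rewrite (gp i Hi K.+1) HK ?mulr0 //.
    have : (K.+1)%:Z <= K.+1%:Z * m%:Z by rewrite ler_peMr //; lia.
    lia.
  have := gn i Hi K.+1; rewrite (HK (i - _)); last first.
    have : (K.+1)%:Z <= K.+1%:Z * m%:Z by rewrite ler_peMr //; lia.
    lia.
  by move/eqP; rewrite mulf_eq0 expf_eq0 (negbTE a0) andbF /= => /eqP.
by move=> l; rewrite H !g0 mulr0 subr0.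
Qed.


Lemma int_per (P : int -> Prop) : (forall i, P i <-> P (i + m%:Z)) ->
  forall i (q : int), P i <-> P (i + q * m%:Z).
Proof.
move=> Hp.
have Hn : forall (n : nat) i, P i <-> P (i + n%:Z * m%:Z).
  elim=> [|n IH] i; first by rewrite mul0r addr0.
  rewrite IH Hp; have -> : i + n%:Z * m%:Z + m%:Z = i + n.+1%:Z * m%:Z by nia.
  by [].
move=> i [n|n]; first exact: Hn.
rewrite (Hn n.+1 (i + Negz n * m%:Z)).
have -> : i + Negz n * m%:Z + n.+1%:Z * m%:Z = i by rewrite NegzE; nia.
by [].
Qed.

Lemma int_mod (P : int -> Prop) : (forall i, P i <-> P (i + m%:Z)) ->
  (forall r, 0 <= r -> r < m%:Z -> P r) -> forall i, P i.
Proof.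
move=> Hp H i; rewrite (divz_eq i m%:Z) addrC -int_per //.
apply: H; first by apply: modz_ge0; apply/eqP; lia.
by apply: ltz_pmod; lia.
Qed.

Lemma int_up (P : int -> Prop) j : (forall i, P i <-> P (i + m%:Z)) ->
  (forall k, j <= k -> P k) -> forall i, P i.
Proof.
move=> Hp H; apply: int_mod => // r r0 rm.
rewrite (int_per P Hp r `|j|%:Z); apply: H.
have : (`|j|%:Z) <= `|j|%:Z * m%:Z by rewrite ler_peMr //; lia.
lia.
Qed.

Lemma int_down (P : int -> Prop) j : (forall i, P i <-> P (i + m%:Z)) ->
  (forall k, k <= j -> P k) -> forall i, P i.
Proof.
move=> Hp H; apply: int_mod => // r r0 rm.
rewrite (int_per P Hp r (- `|j|.+1%:Z)); apply: H.
have : (`|j|.+1%:Z) <= `|j|.+1%:Z * m%:Z by rewrite ler_peMr //; lia.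
rewrite mulNr; nia.
Qed.

Definition good (P : laurent C -> Prop) :=
  [/\ forall u v, P u -> P v -> P (fun j => u j + v j),
      forall k u, P u -> P (fun j => k * u j)
    & forall u v, P u -> finsupp v -> N (fun j => u j - v j) -> P v].

Lemma good_shift P : good P -> forall i, P (e i) <-> P (e (i + m%:Z)).
Proof.
move=> [Pa Ps Pn] i; split=> H.
  apply: (Pn _ _ (Ps a _ H)); first exact: finsupp_e.
  have := N_scale (-1) _ (N_shift i).
  have -> : (fun j => -1 * (e (i + m%:Z) j - a * e i j)) =
            (fun j => a * e i j - e (i + m%:Z) j).
    by apply: functional_extensionality => j; ring.
  by [].
apply: (Pn _ _ (Ps a^-1 _ H)); first exact: finsupp_e.
have := N_scale a^-1 _ (N_shift i).
have -> : (fun j => a^-1 * (e (i + m%:Z) j - a * e i j)) =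
          (fun j => a^-1 * e (i + m%:Z) j - e i j).
  by apply: functional_extensionality => j; rewrite mulrBr mulrA mulVf // mul1r.
by [].
Qed.

Lemma good_all P : good P -> (forall i, P (e i)) -> forall u, finsupp u -> P u.
Proof.
move=> [Pa Ps Pn] He u [K]; elim: K u => [|K IH] u Hu.
  have -> : u = (fun j => u 0 * e 0 j).
    apply: functional_extensionality => j; rewrite /e; case: eqP => [->|Hj].
      by rewrite mulr1.
    by rewrite mulr0 Hu //; lia.
  exact: Ps.
pose u' := fun j : int => if (j == K.+1%:Z) || (j == - K.+1%:Z) then 0 else u j.
have -> : u = (fun j => u' j + (u K.+1%:Z * e K.+1%:Z j
                                 + u (- K.+1%:Z) * e (- K.+1%:Z) j)).
  apply: functional_extensionality => j; rewrite /u' /e.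
  case: (eqVneq j K.+1%:Z) => [->|H1] /=.
    by rewrite mulr1 mulr0; ring.
  case: (eqVneq j (- K.+1%:Z)) => [->|H2] /=.
    by rewrite mulr1 mulr0; ring.
  by rewrite !mulr0; ring.
apply: (Pa); last by apply: (Pa); apply: (Ps).
apply: IH => i Hi; rewrite /u'.
case: (eqVneq i K.+1%:Z) => [//|H1] /=.
case: (eqVneq i (- K.+1%:Z)) => [//|H2] /=.
apply: Hu; lia.
Qed.


Definition w (k : 'I_m -> C) : laurent C := fun j => \sum_(i < m) k i * e (i%:Z) j.

Lemma sum_at k (n : 'I_m) : w k n%:Z = k n.
Proof.
rewrite /w (bigD1 n) //= /e eqxx mulr1 big1 ?addr0 // => i Hi.
case: eqP => [E|_]; last by rewrite mulr0.
have Ei : i = n by apply: val_inj => /=; lia.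
by rewrite Ei eqxx in Hi.
Qed.

Lemma sum_out k x : (forall n : 'I_m, x != n%:Z) -> w k x = 0.
Proof.
move=> H; rewrite /w big1 // => i _; rewrite /e.
by rewrite (negbTE (H i)) mulr0.
Qed.

Lemma sum_cases (x : int) : (exists n : 'I_m, x = n%:Z) \/ (forall n : 'I_m, x != n%:Z).
Proof.
case: x => [n|n].
  case: (ltnP n m) => Hn; first by left; exists (Ordinal Hn).
  by right=> i; apply/eqP => [[E]]; move: (ltn_ord i); rewrite -E; lia.
by right => i; rewrite NegzE; apply/eqP; lia.
Qed.

Lemma finsupp_w k : finsupp (w k).
Proof.
exists m => i Hi; apply: sum_out => n; apply/eqP => E; subst.
move: (ltn_ord n) Hi; lia.
Qed.

Lemma w_small k l : (l < 0) \/ (m%:Z <= l) -> w k l = 0.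
Proof.
move=> H; apply: sum_out => n; apply/eqP => E; subst.
move: (ltn_ord n) H; lia.
Qed.

Lemma N_ext u v : N u -> (forall j, u j = v j) -> N v.
Proof.
by move=> H E; have -> : v = u by apply: functional_extensionality => j; rewrite E.
Qed.

Lemma P_ext (P : laurent C -> Prop) u v : P u -> (forall j, u j = v j) -> P v.
Proof.
by move=> H E; have -> : v = u by apply: functional_extensionality => j; rewrite E.
Qed.

Definition W (u : laurent C) := exists k, N (fun j => u j - w k j).

Lemma good_W : good W.
Proof.
split.
- move=> u v [k1 H1] [k2 H2]; exists (fun i => k1 i + k2 i).
  apply: N_ext (N_add _ _ H1 H2) _ => j.
  rewrite /w; under [X in _ = _ - X]eq_bigr => i _ do rewrite mulrDl.
  rewrite big_split /=; ring.
- move=> c u [k1 H1]; exists (fun i => c * k1 i).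
  apply: N_ext (N_scale c _ H1) _ => j.
  rewrite /w mulrBr mulr_sumr; congr (_ - _); apply: eq_bigr => i _; ring.
- move=> u v [k1 H1] _ H2; exists k1.
  apply: N_ext (N_add _ _ (N_scale (-1) _ H2) H1) _ => j; ring.
Qed.

Lemma W_e i : W (e i).
Proof.
apply: (int_mod (fun i => W (e i))) => [j|r r0 rm].
  exact: (good_shift W good_W j).
case: r r0 rm => [n _ Hn|n]; last by rewrite NegzE; lia.
have Hn' : (n < m)%N by lia.
exists (fun i : 'I_m => if i == Ordinal Hn' then 1 else 0).
apply: N_ext N0 _ => j.
case: (sum_cases j) => [[n' ->]|Hj].
  rewrite sum_at /e.
  case: (eqVneq n' (Ordinal Hn')) => [->|H]; first by rewrite eqxx subrr.
  have -> : (n'%:Z == n%:Z) = false.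
    by apply: contraNF H => /eqP E; apply/eqP/val_inj => /=; lia.
  by rewrite subrr.
rewrite sum_out // /e.
by rewrite (negbTE (Hj (Ordinal Hn'))) subrr.
Qed.

Lemma span u : finsupp u -> W u.
Proof. by apply: good_all; [exact: good_W | exact: W_e]. Qed.


Lemma indep k : N (w k) -> forall i, k i = 0.
Proof.
move=> H i; rewrite -sum_at; apply: (N_small _ H) => l Hl; exact: w_small.
Qed.


Lemma e0_notN : ~ N (e 0).
Proof.
move=> H.
have H2 : forall l, e 0 l = 0.
  apply: (N_small _ H) => l Hl; rewrite /e; case: eqP => // E; subst; lia.
by move: (H2 0); rewrite /e eqxx => /eqP; rewrite oner_eq0.
Qed.

Variable f : {poly C}.
Variable lam : int -> C.
Hypothesis Hf : in_Sf f lam.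
Hypothesis Hper : lam_period lam m.

Lemma lam_mul l q : lam (l + q * m%:Z) = lam l.
Proof. by apply: (proj2 (Hper (q * m%:Z))); apply: dvdz_mull; apply: dvdzz. Qed.

Lemma lam_inj_lt (i j : nat) : (i < j)%N -> (j < m)%N -> lam i%:Z <> lam j%:Z.
Proof.
move=> ij jm E.
have Hn : forall n : nat, lam (i%:Z + n%:Z) = lam (j%:Z + n%:Z).
  elim=> [|n IH]; first by rewrite !addr0.
  have -> : i%:Z + n.+1%:Z = i%:Z + n%:Z + 1 by lia.
  have -> : j%:Z + n.+1%:Z = j%:Z + n%:Z + 1 by lia.
  by rewrite -!Hf IH.
have Hd : forall l, lam (l + (j%:Z - i%:Z)) = lam l.
  move=> l.
  pose q : int := (`|l|.+1)%:Z.
  have Hq : `|l|%:Z + m%:Z <= q * m%:Z.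
    rewrite /q; have : (1 <= m)%N by lia. nia.
  have [n En] : exists n : nat, l + q * m%:Z - i%:Z = n%:Z.
    exists (absz (l + q * m%:Z - i%:Z)%R); move: jm; lia.
  have E1 := lam_mul l q; have E2 := lam_mul (l + (j%:Z - i%:Z)) q.
  rewrite -E1 -E2.
  have -> : l + q * m%:Z = i%:Z + n%:Z by lia.
  have -> : l + (j%:Z - i%:Z) + q * m%:Z = j%:Z + n%:Z by lia.
  by rewrite Hn.
have := (proj1 (Hper (j%:Z - i%:Z))) Hd.
have -> : j%:Z - i%:Z = (j - i)%N%:Z by lia.
rewrite dvdzE /= gtnNdvd //; lia.
Qed.

Lemma lam_inj (i j : 'I_m) : i != j -> lam i%:Z != lam j%:Z.
Proof.
move=> H; apply/eqP; case: (ltngtP i j) => [lt|gt|eq].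
- exact: (lam_inj_lt _ _ lt (ltn_ord j)).
- by move=> E; apply: (lam_inj_lt _ _ gt (ltn_ord i)); rewrite E.
- by move: H; rewrite (val_inj eq) eqxx.
Qed.

Lemma proj_lem (M : Hact C) S : act_h M = (fun c i => lam i * c i) ->
  qsubmodule M N S -> forall v (r : seq 'I_m) (P : pred 'I_m), S v ->
  S (fun x => (\prod_(i <- r | P i) (lam x - lam i%:Z)) * v x).
Proof.
move=> Mh [_ [S0 Sa Ss Sact _]] v r P Sv; elim: r => [|i r IH].
  by apply: P_ext (Ss 1 v Sv) _ => j; rewrite big_nil.
case Pi: (P i); last by apply: P_ext IH _ => x; rewrite big_cons Pi.
have [_ _] := Sact _ IH; rewrite Mh => Hh.
apply: P_ext (Sa _ _ Hh (Ss (- lam i%:Z) _ IH)) _ => x /=.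
rewrite big_cons Pi; ring.
Qed.

Lemma simple_gen (M : Hact C) : act_h M = (fun c i => lam i * c i) ->
  (forall S, qsubmodule M N S -> forall j, S (e j) -> forall i, S (e i)) ->
  qsimple M N.
Proof.
move=> Mh Hall; split.
  by exists (e 0); split; [exact: finsupp_e | exact: e0_notN].
move=> S HS; case: (classic (forall u, S u -> N u)) => [H|H]; first by left.
right.
have [u Hu] : exists u, ~ (S u -> N u) by apply: not_all_ex_not.
have [Su NSu] : S u /\ ~ N u by tauto.
have HS' := HS; case: HS' => [Sfin [S0 Sa Ss Sact Sn]].
have [k Hk] := span u (Sfin _ Su).
have Sw : S (w k) by apply: (Sn u) => //; exact: finsupp_w.
case: (classic (exists j, k j != 0)) => [[j kj]|Hn]; last first.
  exfalso; apply: NSu; apply: N_ext Hk _ => x.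
  have -> : w k x = 0.
    rewrite /w big1 // => i _; case: (eqVneq (k i) 0) => [->|Hi].
      by rewrite mul0r.
    by exfalso; apply: Hn; exists i.
  by rewrite subr0.
have Sp := proj_lem M S Mh HS (w k) (index_enum 'I_m) (fun i => i != j) Sw.
pose c := (\prod_(i < m | i != j) (lam j%:Z - lam i%:Z)) * k j.
have c0 : c != 0.
  rewrite mulf_neq0 //; apply/prodf_neq0 => i Hi.
  by rewrite subr_eq0; apply: lam_inj; rewrite eq_sym.
have Sej : S (e j%:Z).
  apply: P_ext (Ss c^-1 _ Sp) _ => x.
  case: (sum_cases x) => [[n ->]|Hx].
    rewrite sum_at /e; case: (eqVneq n j) => [->|Hnj].
      by rewrite eqxx; exact: (mulVf c0).
    have -> : (n%:Z == j%:Z) = false.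
      by apply: contraNF Hnj => /eqP E; apply/eqP/val_inj => /=; lia.
    by rewrite (bigD1 n) //= subrr !mul0r mulr0.
  rewrite sum_out // !mulr0 /e.
  by rewrite (negbTE (Hx j)).
have gS : good S by split => // u0 v0 Su0 Fv Nuv; exact: (Sn u0 v0 Fv Nuv Su0).
apply: (good_all S gS); exact: (Hall S HS _ Sej).
Qed.

Lemma A_all zd S : qsubmodule (A_act lam zd) N S -> forall j, S (e j) -> forall i, S (e i).
Proof.
move=> HS j Sj; have HS' := HS; case: HS' => [Sfin [S0 Sa Ss Sact Sn]].
have gS : good S by split => // u0 v0 Su0 Fv Nuv; exact: (Sn u0 v0 Fv Nuv Su0).
apply: (int_up (fun i => S (e i)) j (good_shift S gS)) => k Hk.
have Hn : forall n : nat, S (e (j + n%:Z)).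
  elim=> [|n IH]; first by rewrite addr0.
  have [Hx _ _] := Sact _ IH.
  apply: P_ext Hx _ => i /=; rewrite /e.
  have -> : (i - 1 == j + n%:Z) = (i == j + n.+1%:Z) by apply/eqP/eqP; lia.
  by [].
have -> : k = j + (absz (k - j)%R)%:Z by lia.
exact: Hn.
Qed.

Lemma B_all zd S : qsubmodule (B_act lam zd) N S -> forall j, S (e j) -> forall i, S (e i).
Proof.
move=> HS j Sj; have HS' := HS; case: HS' => [Sfin [S0 Sa Ss Sact Sn]].
have gS : good S by split => // u0 v0 Su0 Fv Nuv; exact: (Sn u0 v0 Fv Nuv Su0).
apply: (int_down (fun i => S (e i)) j (good_shift S gS)) => k Hk.
have Hn : forall n : nat, S (e (j - n%:Z)).
  elim=> [|n IH]; first by rewrite subr0.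
  have [_ Hy _] := Sact _ IH.
  apply: P_ext Hy _ => i /=; rewrite /e.
  have -> : (i + 1 == j - n%:Z) = (i == j - n.+1%:Z) by apply/eqP/eqP; lia.
  by [].
have -> : k = j - (absz (j - k)%R)%:Z by lia.
exact: Hn.
Qed.

End Aux.

Theorem lemma8 (C : numClosedFieldType) (f : {poly C}) (lam : int -> C)
    (m : nat) (zd a : C) :
  in_Sf f lam -> lam_period lam m -> m <> 0%N -> a != 0 ->
  [/\ qdim (ideal_tma m a) m, qsimple (A_act lam zd) (ideal_tma m a)
    & qsimple (B_act lam zd) (ideal_tma m a)].
Proof.
move=> Hf Hper m0 a0; split.
- exists (fun i : 'I_m => e C (i%:Z)); split.
  + by move=> i; exact: (@finsupp_e C m a m0 a0 i).
  + by move=> u Hu; exact: (@span C m a m0 a0 u Hu).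
  + by move=> k Hk; exact: (@indep C m a m0 a0 k Hk).
- apply: (@simple_gen C m a m0 a0 f lam Hf Hper) => //.
  exact: (@A_all C m a m0 a0 lam zd).
- apply: (@simple_gen C m a m0 a0 f lam Hf Hper) => //.
  exact: (@B_all C m a m0 a0 lam zd).
Qed.
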